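(* Let $(a_0,\ldots,a_n)$ be a finite sequence of positive integers and $m\ge 1$ an integer. For a positive integer $N$ let $\beta^N$ be the number whose continued fraction digits (indexed from $0$) are $a_0,\ldots,a_n$ in positions $0,\ldots,n$, $N$ in position $n+m$, and $1$ in all other positions. Then for every positive integer $N$: (1) for $0\le i\le n+m$, $\left|\log\frac{\alpha_i(\beta^N)}{\alpha_i(\beta^{N+1})}\right|<2^{i-(n+m)}/N$; (2) for $0\le i<n+m$, $\left|\log\frac{\alpha_i(\beta^N)}{\alpha_i(\beta^1)}\right|<2^{i-(n+m)}$; (3) for $0\le i<n+m$, $\left|\log\frac{\log(1/\alpha_i(\beta^N))}{\log(1/\alpha_i(\beta^{N+1}))}\right|<2^{i-(n+m)+1}$; (4) for $0\le i<n+m-1$, $\left|\log\frac{\log(1/\alpha_i(\beta^N))}{\log(1/\alpha_i(\beta^1))}\right|<2^{i-(n+m)+1}$.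
   Context: For positive integers $d_0,d_1,\ldots$, $[d_0,d_1,d_2,\ldots]$ denotes the continued fraction $\cfrac{1}{d_0+\cfrac{1}{d_1+\cfrac{1}{d_2+\cdots}}}$, and for $\beta=[d_0,d_1,\ldots]$ we write $\alpha_j(\beta)=[d_j,d_{j+1},\ldots]$. *)

(* Defs.v *)
From Stdlib Require Import Reals Lra Lia ZArith.
From Coquelicot Require Import Coquelicot.
Open Scope R_scope.

Fixpoint cf_conv (d : nat -> nat) (k : nat) : R :=
  match k with
  | O => 0
  | S k' => / (INR (d O) + cf_conv (fun j => d (S j)) k')
  end.

(* Value of the infinite continued fraction [d 0, d 1, d 2, ...]
   = 1/(d0 + 1/(d1 + ...)), defined as the limit of its convergents. *)
Definition cf (d : nat -> nat) : R := real (Lim_seq (cf_conv d)).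

Definition alpha (j : nat) (d : nat -> nat) : R := cf (fun k => d (j + k)%nat).

Definition beta_digits (a : nat -> nat) (n m N : nat) (k : nat) : nat :=
  if (k <=? n)%nat then a k
  else if (k =? n + m)%nat then N
  else 1%nat.

Definition pow2Z (z : Z) : R := powerRZ 2 z.

(* Main.v *)
Require Import Defs.
From Stdlib Require Import Reals Lra Lia ZArith.
From Coquelicot Require Import Coquelicot.
Open Scope R_scope.


Lemma cf_conv_ext (d e : nat -> nat) k :
  (forall j, d j = e j) -> cf_conv d k = cf_conv e k.
Proof.
  revert d e; induction k as [|k IH]; intros d e H; simpl; auto.
  rewrite H, (IH (fun j => d (S j)) (fun j => e (S j))); auto.
Qed.

Lemma cf_ext (d e : nat -> nat) :
  (forall j, d j = e j) -> cf d = cf e.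
Proof.
  intros H; unfold cf; rewrite (Lim_seq_ext _ _ (fun k => cf_conv_ext d e k H)); auto.
Qed.

Definition tphi : R := (sqrt 5 - 1) / 2.

Lemma tphi_props : tphi * (1 + tphi) = 1 /\ 0.61 < tphi < 0.62.
Proof.
  unfold tphi.
  assert (H5 : sqrt 5 * sqrt 5 = 5) by (apply sqrt_sqrt; lra).
  assert (H0 : 0 <= sqrt 5) by apply sqrt_pos.
  split; [nra|].
  split; nra.
Qed.

Lemma cf_conv_ones_nonneg k : 0 <= cf_conv (fun _ => 1%nat) k.
Proof.
  induction k; simpl; [lra|].
  apply Rlt_le, Rinv_0_lt_compat. lra.
Qed.

Lemma cf_conv_ones_bound k :
  Rabs (cf_conv (fun _ => 1%nat) k - tphi) <= tphi ^ k * tphi.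
Proof.
  destruct tphi_props as [Ht [Ht1 Ht2]].
  induction k as [|k IH].
  - simpl. rewrite Rabs_left1; lra.
  - change (cf_conv (fun _ => 1%nat) (S k)) with (/ (INR 1 + cf_conv (fun _ => 1%nat) k)).
    simpl INR.
    pose proof (cf_conv_ones_nonneg k) as Hc.
    set (c := cf_conv (fun _ => 1%nat) k) in *.
    assert (E : / (1 + c) - tphi = tphi * (tphi - c) / (1 + c)).
    { field_simplify_eq; [|lra]. nra. }
    rewrite E. unfold Rdiv. rewrite !Rabs_mult.
    rewrite (Rabs_right tphi) by lra.
    rewrite (Rabs_right (/ (1 + c))) by (apply Rle_ge, Rlt_le, Rinv_0_lt_compat; lra).
    rewrite Rabs_minus_sym.
    assert (/ (1 + c) <= 1).
    { rewrite <- Rinv_1. apply Rinv_le_contravar; lra. }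
    assert (0 <= Rabs (c - tphi)) by apply Rabs_pos.
    simpl.
    assert (0 <= tphi ^ k) by (apply pow_le; lra).
    set (A := Rabs (c - tphi)) in *.
    set (I := / (1 + c)) in *.
    assert (tphi * A * I <= tphi * A).
    { rewrite <- (Rmult_1_r (tphi * A)) at 2. apply Rmult_le_compat_l; nra. }
    nra.
Qed.

Lemma cf_conv_ones_lim : is_lim_seq (cf_conv (fun _ => 1%nat)) tphi.
Proof.
  destruct tphi_props as [Ht [Ht1 Ht2]].
  assert (G : is_lim_seq (fun k => tphi ^ k * tphi) 0).
  { replace (Finite 0) with (Rbar_mult 0 tphi) by (simpl; f_equal; ring).
    apply (is_lim_seq_scal_r (fun k => tphi ^ k) tphi 0).
    apply is_lim_seq_geom. rewrite Rabs_right; lra. }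
  assert (Hlo : is_lim_seq (fun k => tphi - (tphi ^ k * tphi)) (tphi - 0)).
  { apply is_lim_seq_minus'. apply is_lim_seq_const. exact G. }
  assert (Hhi : is_lim_seq (fun k => tphi + (tphi ^ k * tphi)) (tphi + 0)).
  { apply is_lim_seq_plus'. apply is_lim_seq_const. exact G. }
  replace (tphi - 0) with tphi in Hlo by ring.
  replace (tphi + 0) with tphi in Hhi by ring.
  refine (is_lim_seq_le_le _ _ _ tphi _ Hlo Hhi).
  intros k. pose proof (cf_conv_ones_bound k) as B.
  apply Rabs_le_between' in B. lra.
Qed.

Lemma cf_conv_step (d : nat -> nat) (L : R) :
  (1 <= d O)%nat -> 0 <= L ->
  is_lim_seq (cf_conv (fun j => d (S j))) L ->
  is_lim_seq (cf_conv d) (/ (INR (d O) + L)).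
Proof.
  intros Hd HL H.
  apply is_lim_seq_incr_1.
  assert (Hd' : 1 <= INR (d O)) by (apply (le_INR 1); exact Hd).
  assert (H2 : is_lim_seq (fun k => INR (d O) + cf_conv (fun j => d (S j)) k) (INR (d O) + L)).
  { apply is_lim_seq_plus'. apply is_lim_seq_const. exact H. }
  pose proof (is_lim_seq_inv _ _ H2) as H3.
  simpl in H3. apply H3. intro E. injection E. lra.
Qed.

Lemma cf_conv_conv (K : nat) : forall d : nat -> nat,
  (forall k, 1 <= d k)%nat -> (forall k, (K <= k)%nat -> d k = 1%nat) ->
  exists l : R, is_lim_seq (cf_conv d) l /\ 0 < l < 1.
Proof.
  destruct tphi_props as [Ht [Ht1 Ht2]].
  induction K as [|K IH]; intros d Hd HK.
  - exists tphi. split; [|split; lra].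
    refine (is_lim_seq_ext _ _ _ _ cf_conv_ones_lim).
    intro k. apply cf_conv_ext. intro j. symmetry. apply HK. lia.
  - destruct (IH (fun j => d (S j))) as [l [Hl Hl01]].
    + intro k; apply Hd.
    + intros k Hk; apply HK; lia.
    + exists (/ (INR (d O) + l)). split.
      * apply cf_conv_step; [apply Hd|lra|exact Hl].
      * assert (Hd' : 1 <= INR (d O)) by (apply (le_INR 1); apply Hd).
        split. apply Rinv_0_lt_compat; lra.
        rewrite <- Rinv_1. apply Rinv_lt_contravar; lra.
Qed.

Lemma cf_facts (d : nat -> nat) (K : nat) :
  (forall k, 1 <= d k)%nat -> (forall k, (K <= k)%nat -> d k = 1%nat) ->
  0 < cf d < 1 /\ cf d = / (INR (d O) + cf (fun j => d (S j))).
Proof.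
  intros Hd HK.
  destruct (cf_conv_conv K d Hd HK) as [l [Hl Hl01]].
  destruct (cf_conv_conv K (fun j => d (S j))) as [l' [Hl' Hl'01]].
  - intro k; apply Hd.
  - intros k Hk; apply HK; lia.
  - assert (E1 : cf d = l) by (unfold cf; rewrite (is_lim_seq_unique _ _ Hl); reflexivity).
    assert (E2 : cf (fun j => d (S j)) = l')
      by (unfold cf; rewrite (is_lim_seq_unique _ _ Hl'); reflexivity).
    rewrite E1, E2. split; auto.
    pose proof (cf_conv_step d l' (Hd O) (Rlt_le _ _ (proj1 Hl'01)) Hl') as H.
    pose proof (is_lim_seq_unique _ _ Hl) as U1.
    pose proof (is_lim_seq_unique _ _ H) as U2.
    rewrite U1 in U2. injection U2. auto.
Qed.

Lemma cf_ones : cf (fun _ => 1%nat) = tphi.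
Proof. unfold cf; rewrite (is_lim_seq_unique _ _ cf_conv_ones_lim); reflexivity. Qed.

Lemma ln_le_minus1 a : 0 < a -> ln a <= a - 1.
Proof. intro Ha. pose proof (exp_ineq1_le (ln a)). rewrite exp_ln in H; lra. Qed.

Lemma half_one c x y : 1 <= c -> 0 < x < 1 -> 0 < y < 1 -> y <= x ->
  2 * (ln (c + x) - ln (c + y)) <= ln x - ln y.
Proof.
  intros Hc Hx Hy Hyx.
  assert (E1 : 2 * ln (c + x) + ln y = ln ((c + x) * (c + x) * y)).
  { rewrite !ln_mult by nra. ring. }
  assert (E2 : ln x + 2 * ln (c + y) = ln (x * (c + y) * (c + y))).
  { rewrite !ln_mult by nra. ring. }
  assert (ln ((c + x) * (c + x) * y) <= ln (x * (c + y) * (c + y))).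
  { apply ln_le. apply Rmult_lt_0_compat; [apply Rmult_lt_0_compat|]; lra.
    assert (c * c >= 1) by nra. assert (x * y < 1) by nra.
    assert (0 <= (x - y) * (c * c - x * y)) by (apply Rmult_le_pos; lra). nra. }
  lra.
Qed.

Lemma half c x y : 1 <= c -> 0 < x < 1 -> 0 < y < 1 ->
  Rabs (ln (/ (c + x) / / (c + y))) <= / 2 * Rabs (ln (x / y)).
Proof.
  intros Hc Hx Hy.
  rewrite !ln_div by (try apply Rinv_0_lt_compat; lra).
  rewrite !ln_Rinv by lra.
  destruct (Rle_dec y x) as [Hyx|Hyx].
  - pose proof (half_one c x y Hc Hx Hy Hyx).
    assert (ln y <= ln x) by (apply ln_le; lra).
    assert (ln (c + y) <= ln (c + x)) by (apply ln_le; lra).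
    rewrite Rabs_left1 by lra. rewrite Rabs_right by lra. lra.
  - assert (Hxy : x <= y) by lra.
    pose proof (half_one c y x Hc Hy Hx Hxy).
    assert (ln x <= ln y) by (apply ln_le; lra).
    assert (ln (c + x) <= ln (c + y)) by (apply ln_le; lra).
    rewrite Rabs_right by lra. rewrite Rabs_left1 by lra. lra.
Qed.

Lemma loglog_one c x y : 1 <= c -> 0 < x < 1 -> 0 < y < 1 -> y <= x ->
  ln (ln (c + x)) - ln (ln (c + y)) <= ln x - ln y.
Proof.
  intros Hc Hx Hy Hyx.
  assert (L0 : 0 < ln (c + y)) by (rewrite <- ln_1; apply ln_increasing; lra).
  assert (L1 : ln (c + y) <= ln (c + x)) by (apply ln_le; lra).
  assert (A1 : ln (c + x) - ln (c + y) <= (x - y) / (c + y)).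
  { rewrite <- ln_div by lra.
    pose proof (ln_le_minus1 ((c + x) / (c + y))).
    assert ((c + x) / (c + y) - 1 = (x - y) / (c + y)) by (field; lra).
    assert (0 < (c + x) / (c + y)) by (apply Rdiv_lt_0_compat; lra). lra. }
  assert (A2 : y / (c + y) <= ln (c + y)).
  { pose proof (ln_le_minus1 (/ (c + y))).
    rewrite ln_Rinv in H by lra.
    assert (0 < / (c + y)) by (apply Rinv_0_lt_compat; lra).
    assert (y / (c + y) <= 1 - / (c + y)).
    { unfold Rdiv. apply (Rmult_le_reg_r (c + y)). lra.
      rewrite Rmult_assoc, Rinv_l by lra. rewrite Rmult_minus_distr_r, Rinv_l by lra. lra. }
    lra. }
  assert (Key : y * ln (c + x) <= x * ln (c + y)).
  { assert (y * ((x - y) / (c + y)) <= (x - y) * ln (c + y)).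
    { replace (y * ((x - y) / (c + y))) with ((x - y) * (y / (c + y))) by (field; lra).
      apply Rmult_le_compat_l; lra. }
    nra. }
  assert (E : ln (ln (c + x)) + ln y <= ln x + ln (ln (c + y))).
  { rewrite <- !ln_mult by lra. apply ln_le. nra. lra. }
  lra.
Qed.

Lemma loglog c x y : 1 <= c -> 0 < x < 1 -> 0 < y < 1 ->
  Rabs (ln (ln (c + x) / ln (c + y))) <= Rabs (ln (x / y)).
Proof.
  intros Hc Hx Hy.
  assert (0 < ln (c + y)) by (rewrite <- ln_1; apply ln_increasing; lra).
  assert (0 < ln (c + x)) by (rewrite <- ln_1; apply ln_increasing; lra).
  rewrite !ln_div by lra.
  destruct (Rle_dec y x) as [Hyx|Hyx].
  - pose proof (loglog_one c x y Hc Hx Hy Hyx).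
    assert (ln y <= ln x) by (apply ln_le; lra).
    assert (ln (ln (c + y)) <= ln (ln (c + x))) by (apply ln_le; [lra|apply ln_le; lra]).
    rewrite !Rabs_right by lra. lra.
  - assert (Hxy : x <= y) by lra.
    pose proof (loglog_one c y x Hc Hy Hx Hxy).
    assert (ln x <= ln y) by (apply ln_le; lra).
    assert (ln (ln (c + x)) <= ln (ln (c + y))) by (apply ln_le; [lra|apply ln_le; lra]).
    rewrite !Rabs_left1 by lra. lra.
Qed.

Lemma chain (X Y d : nat -> R) (M : nat) :
  (forall i, (i <= M)%nat -> 0 < X i < 1 /\ 0 < Y i < 1) ->
  (forall i, (i < M)%nat -> 1 <= d i /\ X i = / (d i + X (S i)) /\ Y i = / (d i + Y (S i))) ->
  forall j, (j <= M)%nat ->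
  Rabs (ln (X (M - j)%nat / Y (M - j)%nat)) <= (/ 2) ^ j * Rabs (ln (X M / Y M)).
Proof.
  intros H01 Hrec j. induction j as [|j IH]; intros Hj.
  - rewrite Nat.sub_0_r. simpl. lra.
  - destruct (Hrec (M - S j)%nat ltac:(lia)) as [Hd [EX EY]].
    replace (S (M - S j)) with (M - j)%nat in EX, EY by lia.
    rewrite EX, EY.
    destruct (H01 (M - j)%nat ltac:(lia)) as [Hx Hy].
    eapply Rle_trans. apply half; auto.
    simpl. rewrite Rmult_assoc. apply Rmult_le_compat_l. lra. apply IH. lia.
Qed.

Lemma exp_half : 1.64 <= exp (/ 2).
Proof.
  pose proof (exp_ge_taylor (/ 2) 3 ltac:(lra)).
  simpl in H. lra.
Qed.

Lemma pow2Z_eq (i M : nat) : (i <= M)%nat ->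
  pow2Z (Z.of_nat i - Z.of_nat M) = (/ 2) ^ (M - i).
Proof.
  intro H. unfold pow2Z.
  replace (Z.of_nat i - Z.of_nat M)%Z with (- Z.of_nat (M - i))%Z by lia.
  rewrite powerRZ_neg', <- pow_powerRZ, pow_inv. reflexivity.
Qed.

Lemma alpha_facts (d : nat -> nat) (K : nat) :
  (forall k, 1 <= d k)%nat -> (forall k, (K <= k)%nat -> d k = 1%nat) ->
  forall i, 0 < alpha i d < 1 /\ alpha i d = / (INR (d i) + alpha (S i) d).
Proof.
  intros Hd HK i.
  destruct (cf_facts (fun k => d (i + k)%nat) K) as [H1 H2].
  - intro k; apply Hd.
  - intros k Hk; apply HK; lia.
  - unfold alpha. split; auto. rewrite H2. rewrite Nat.add_0_r.
    f_equal. f_equal. apply cf_ext. intro j. f_equal. lia.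
Qed.

Lemma alpha_ones (d : nat -> nat) (K : nat) :
  (forall k, (K <= k)%nat -> d k = 1%nat) -> alpha K d = tphi.
Proof.
  intros HK. unfold alpha. rewrite <- cf_ones. apply cf_ext. intro j. apply HK. lia.
Qed.

Lemma base1 (N t : R) : 1 <= N -> 0 < t < 1 ->
  Rabs (ln (/ (N + t) / / (N + 1 + t))) < / N.
Proof.
  intros HN Ht.
  rewrite ln_div by (apply Rinv_0_lt_compat; lra).
  rewrite !ln_Rinv by lra.
  assert (ln (N + t) <= ln (N + 1 + t)) by (apply ln_le; lra).
  rewrite Rabs_right by lra.
  replace (- ln (N + t) - - ln (N + 1 + t)) with (ln ((N + 1 + t) / (N + t)))
    by (rewrite ln_div by lra; ring).
  pose proof (ln_le_minus1 ((N + 1 + t) / (N + t)) ltac:(apply Rdiv_lt_0_compat; lra)).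
  assert ((N + 1 + t) / (N + t) - 1 = / (N + t)) by (field; lra).
  assert (/ (N + t) < / N) by (apply Rinv_lt_contravar; nra).
  lra.
Qed.

Lemma base2 (c N t : R) : 1 <= c -> 1 <= N -> 0.61 < t < 0.62 ->
  Rabs (ln (/ (c + / (N + t)) / / (c + / (1 + t)))) < / 2.
Proof.
  intros Hc HN Ht.
  set (u := / (N + t)). set (v := / (1 + t)).
  assert (0 < u) by (apply Rinv_0_lt_compat; lra).
  assert (u <= v) by (apply Rinv_le_contravar; lra).
  assert (v <= / 1.61) by (apply Rinv_le_contravar; lra).
  rewrite ln_div by (apply Rinv_0_lt_compat; lra).
  rewrite !ln_Rinv by lra.
  assert (ln (c + u) <= ln (c + v)) by (apply ln_le; lra).
  rewrite Rabs_right by lra.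
  replace (- ln (c + u) - - ln (c + v)) with (ln ((c + v) / (c + u)))
    by (rewrite ln_div by lra; ring).
  assert ((c + v) / (c + u) < 1.64).
  { apply (Rmult_lt_reg_r (c + u)). lra.
    unfold Rdiv. rewrite Rmult_assoc, Rinv_l by lra. nra. }
  pose proof exp_half.
  assert (Hl : ln ((c + v) / (c + u)) < ln (exp (/ 2))).
  { apply ln_increasing. apply Rdiv_lt_0_compat; lra. lra. }
  rewrite ln_exp in Hl. lra.
Qed.

Theorem mainTheorem5 (a : nat -> nat) (n m : nat)
  (ha : forall k : nat, (k <= n)%nat -> (1 <= a k)%nat)
  (hm : (1 <= m)%nat) :
  forall N : nat, (1 <= N)%nat ->
    (forall i : nat, (i <= n + m)%nat ->
       Rabs (ln (alpha i (beta_digits a n m N) / alpha i (beta_digits a n m (S N))))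
         < pow2Z (Z.of_nat i - Z.of_nat (n + m)) / INR N)
 /\ (forall i : nat, (i < n + m)%nat ->
       Rabs (ln (alpha i (beta_digits a n m N) / alpha i (beta_digits a n m 1)))
         < pow2Z (Z.of_nat i - Z.of_nat (n + m)))
 /\ (forall i : nat, (i < n + m)%nat ->
       Rabs (ln (ln (/ alpha i (beta_digits a n m N))
                 / ln (/ alpha i (beta_digits a n m (S N)))))
         < pow2Z (Z.of_nat i - Z.of_nat (n + m) + 1))
 /\ (forall i : nat, (i + 1 < n + m)%nat ->
       Rabs (ln (ln (/ alpha i (beta_digits a n m N))
                 / ln (/ alpha i (beta_digits a n m 1))))
         < pow2Z (Z.of_nat i - Z.of_nat (n + m) + 1)).
Proof.
  intros N HN.
  destruct tphi_props as [Ht [Ht1 Ht2]].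
  set (M := (n + m)%nat).
  assert (Hdig : forall P, (1 <= P)%nat -> forall k, (1 <= beta_digits a n m P k)%nat).
  { intros P HP k. unfold beta_digits.
    destruct (Nat.leb_spec k n). apply ha; lia.
    destruct (Nat.eqb_spec k (n + m)); lia. }
  assert (Htail : forall P k, (S M <= k)%nat -> beta_digits a n m P k = 1%nat).
  { intros P k Hk. unfold beta_digits.
    destruct (Nat.leb_spec k n). lia.
    destruct (Nat.eqb_spec k (n + m)); lia. }
  assert (Hsame : forall P Q i, (i < M)%nat -> beta_digits a n m P i = beta_digits a n m Q i).
  { intros P Q i Hi. unfold beta_digits.
    destruct (Nat.leb_spec i n). auto.
    destruct (Nat.eqb_spec i (n + m)); [lia|auto]. }
  assert (HM : forall P, beta_digits a n m P M = P).
  { intros P. unfold beta_digits, M.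
    destruct (Nat.leb_spec (n + m) n). lia. rewrite Nat.eqb_refl. auto. }
  set (X := fun P i => alpha i (beta_digits a n m P)).
  assert (HX : forall P, (1 <= P)%nat -> forall i,
     0 < X P i < 1 /\ X P i = / (INR (beta_digits a n m P i) + X P (S i))).
  { intros P HP i. apply (alpha_facts _ (S M)). apply Hdig; auto. apply Htail. }
  assert (HXM : forall P, (1 <= P)%nat -> X P M = / (INR P + tphi)).
  { intros P HP. destruct (HX P HP M) as [_ E]. rewrite E, HM. f_equal. f_equal.
    apply (alpha_ones _ (S M)). apply Htail. }
  assert (HN1 : (1 <= S N)%nat) by lia.
  assert (HINR : 1 <= INR N) by (apply (le_INR 1); auto).
  assert (P1 : forall i, (i <= M)%nat ->
     Rabs (ln (X N i / X (S N) i)) < (/ 2) ^ (M - i) * / INR N).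
  { intros i Hi.
    pose proof (chain (X N) (X (S N)) (fun i => INR (beta_digits a n m 1 i)) M) as C.
    assert (Hb : Rabs (ln (X N M / X (S N) M)) < / INR N).
    { rewrite !HXM by auto. rewrite S_INR. apply base1; lra. }
    eapply Rle_lt_trans.
    - replace i with (M - (M - i))%nat at 1 2 by lia.
      apply C.
      + intros k _. split; apply HX; auto.
      + intros k Hk. split; [apply (le_INR 1); apply Hdig; lia|].
        rewrite <- (Hsame N 1%nat k Hk). pattern (beta_digits a n m N k) at 2. rewrite (Hsame N (S N) k Hk).
        split; apply HX; auto.
      + lia.
    - apply Rmult_lt_compat_l. apply pow_lt; lra. exact Hb. }
  assert (P2 : forall i, (i < M)%nat ->
     Rabs (ln (X N i / X 1%nat i)) < (/ 2) ^ (M - i)).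
  { intros i Hi.
    pose proof (chain (X N) (X 1%nat) (fun i => INR (beta_digits a n m 1 i)) (M - 1)) as C.
    assert (Hb : Rabs (ln (X N (M - 1)%nat / X 1%nat (M - 1)%nat)) < / 2).
    { destruct (HX N HN (M - 1)%nat) as [_ E1].
      destruct (HX 1%nat (le_n 1) (M - 1)%nat) as [_ E2].
      rewrite E1, E2. replace (S (M - 1)) with M by lia.
      rewrite !HXM by auto. rewrite (Hsame N 1%nat) by lia.
      apply base2; [apply (le_INR 1); apply Hdig; lia| |split]; simpl; lra. }
    replace (M - i)%nat with (S (M - 1 - i)) by lia.
    eapply Rle_lt_trans.
    - replace i with (M - 1 - (M - 1 - i))%nat at 1 2 by lia.
      apply C.
      + intros k _. split; apply HX; auto.
      + intros k Hk. split; [apply (le_INR 1); apply Hdig; lia|].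
        split; [rewrite <- (Hsame N 1%nat k) by lia|]; apply HX; auto.
      + lia.
    - simpl. rewrite (Rmult_comm (/ 2)). apply Rmult_lt_compat_l. apply pow_lt; lra. exact Hb. }
  assert (Zs : forall i, (i < M)%nat ->
     pow2Z (Z.of_nat i - Z.of_nat M + 1) = (/ 2) ^ (M - S i)).
  { intros i Hi. rewrite <- pow2Z_eq by lia. f_equal. lia. }
  assert (LL : forall P Q i, (1 <= P)%nat -> (1 <= Q)%nat -> (i < M)%nat ->
     Rabs (ln (ln (/ X P i) / ln (/ X Q i))) <= Rabs (ln (X P (S i) / X Q (S i)))).
  { intros P Q i HP HQ Hi.
    destruct (HX P HP i) as [_ E1]. destruct (HX Q HQ i) as [_ E2].
    rewrite E1, E2, !Rinv_inv. rewrite (Hsame Q P i Hi).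
    apply loglog. apply (le_INR 1); apply Hdig; auto. apply HX; auto. apply HX; auto. }
  fold M.
  split; [|split; [|split]].
  - intros i Hi. rewrite pow2Z_eq by lia. apply P1; lia.
  - intros i Hi. rewrite pow2Z_eq by lia. apply P2; lia.
  - intros i Hi. rewrite Zs by lia.
    eapply Rle_lt_trans. apply (LL N (S N) i); auto.
    eapply Rlt_le_trans. apply P1; lia.
    rewrite <- (Rmult_1_r ((/ 2) ^ (M - S i))) at 2.
    apply Rmult_le_compat_l. apply pow_le; lra.
    rewrite <- Rinv_1. apply Rinv_le_contravar; lra.
  - intros i Hi. rewrite Zs by lia.
    eapply Rle_lt_trans. apply (LL N 1%nat i); auto. lia.
    apply P2; lia.
Qed.
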